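(* Let $k\ge 2$ be an integer such that $\mathbb{Z}_k$ is an integral domain (i.e. $k$ is prime), let $q\in\{1,\dots,k-1\}$, $n\ge 3$ and $i\ge 1$ be integers, and let $\alpha(k)$ be the restricted period of the Fibonacci sequence modulo $k$. Consider the cylindrical Lights Out game on a board with $i$ rows and $n$ columns whose lights have $k$ states, with every light initially in the same state $k-q$. Then the game is one-pass solvable if and only if $i\equiv 0 \pmod{\alpha(k)}$ or $i\equiv -1 \pmod{\alpha(k)}$.
   Context: Fibonacci numbers: $F_0=0$, $F_1=1$, $F_i=F_{i-1}+F_{i-2}$. The restricted period $\alpha(k)$ is the least positive integer $m$ such that $F_m\equiv 0\pmod k$. Cylindrical Lights Out game: a grid of buttons with $i$ rows (numbered $1,\dots,i$ from top to bottom) and $n$ columns, whose left and right sides are identified, so column $1$ and column $n$ are adjacent; rows do not wrap around. Each button has a light whose state is an element of $\mathbb{Z}/k\mathbb{Z}$, state $0$ meaning ''off''. Pressing a button once adds $1 \pmod k$ to the state of its own light and to the states of the lights orthogonally adjacent to it (above, below, left, right, where they exist, with columns taken cyclically). One-pass chasing: for $r=2,3,\dots,i$ in turn, press each button in row $r$ the number of times in $\{0,\dots,k-1\}$ needed to bring the light directly above it (in row $r-1$) to state $0$. The game is one-pass solvable if after this procedure all lights on the board are in state $0$. *)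

(* Defs.v *)
From mathcomp Require Import all_boot all_order all_algebra.
Set Implicit Arguments. Unset Strict Implicit. Unset Printing Implicit Defensive.
Import GRing.Theory.
Local Open Scope ring_scope.

Fixpoint fib (m : nat) : nat :=
  match m with
  | 0 => 0
  | 1 => 1
  | (p.+1 as m1).+1 => (fib m1 + fib p)%N
  end.

Definition restricted_period (k a : nat) : Prop :=
  [/\ (0 < a)%N, (k %| fib a)%N &
      forall m, (0 < m)%N -> (k %| fib m)%N -> (a <= m)%N].

(* Board with rows 1..i (indexed by nat; rows outside 1..i are ignored) and
   columns 'I_n (cyclic); light states in 'Z_k. *)
Definition board (n k : nat) := nat -> 'I_n -> 'Z_k.

Definition col_adj (n : nat) (c c' : 'I_n) : bool :=
  (c != c') && ((val c' == (val c).+1 %% n)%N || (val c == (val c').+1 %% n)%N).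

Definition affects (i n : nat) (r : nat) (c : 'I_n) (r' : nat) (c' : 'I_n) : bool :=
  [&& (1 <= r')%N, (r' <= i)%N &
   ((r' == r) && (c' == c))
   || ((c' == c) && ((r' == r.+1) || (r == r'.+1)))
   || ((r' == r) && col_adj c c')].

Definition press (i n k : nat) (r : nat) (c : 'I_n) (m : 'Z_k) (s : board n k)
  : board n k :=
  fun r' c' => s r' c' + (if affects i r c r' c' then m else 0).

(* Step r of one-pass chasing: press each button (r,c) the number of times
   needed to bring light (r-1,c) to 0.  Pressing buttons of row r other than
   (r,c) does not change light (r-1,c), so these counts are all determined by
   the state before the step; the presses are applied in column order. *)
Definition chase_row (i n k : nat) (r : nat) (s : board n k) : board n k :=
  foldl (fun t (c : 'I_n) => press i r c (- s r.-1 c) t) s (enum 'I_n).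

Definition chase (i n k : nat) (s : board n k) : board n k :=
  foldl (fun t r => chase_row i r t) s (iota 2 i.-1).

Definition all_off (i n k : nat) (s : board n k) : Prop :=
  forall r (c : 'I_n), (1 <= r <= i)%N -> s r c = 0.

Definition one_pass_solvable (i n k : nat) (s : board n k) : Prop :=
  all_off i (chase i s).

Definition const_board (n k : nat) (v : 'Z_k) : board n k := fun _ _ => v.

(* Main.v *)
Require Import Defs.
From mathcomp Require Import all_boot all_order all_algebra zify ring.
Local Open Scope nat_scope.

Lemma fibSS m : fib m.+2 = fib m.+1 + fib m. Proof. by []. Qed.

Lemma fib_add m n : fib (m + n.+1) = fib m.+1 * fib n.+1 + fib m * fib n.
Proof.
elim: m n => [|m IH] n; first by rewrite add0n /= mul1n mul0n addn0.
rewrite addSnnS IH !fibSS; ring.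
Qed.

Lemma fib_coprime m : coprime (fib m) (fib m.+1).
Proof.
elim: m => [|m IH]; first by [].
by rewrite /coprime fibSS gcdnDl gcdnC.
Qed.

Lemma fib_period k a m : prime k -> k %| fib a -> (k %| fib (a + m)) = (k %| fib m).
Proof.
move=> pk ka; case: m => [|m]; first by rewrite addn0 ka dvdn0.
rewrite fib_add dvdn_addl; last by apply: dvdn_mulr.
rewrite Euclid_dvdM //.
have -> : (k %| fib a.+1) = false.
  apply/negP => ka1.
  have := fib_coprime a; rewrite /coprime => /eqP g.
  have : k %| gcdn (fib a) (fib a.+1) by rewrite dvdn_gcd ka ka1.
  by rewrite g dvdn1 => /eqP k1; rewrite k1 in pk.
by [].
Qed.

Lemma fib_dvd k a m : prime k -> restricted_period k a ->
  (k %| fib m) = (m %% a == 0).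
Proof.
move=> pk [a0 ka amin].
have H : forall q r, (k %| fib (q * a + r)) = (k %| fib r).
  elim=> [|q IH] r; first by rewrite mul0n add0n.
  by rewrite mulSn -addnA fib_period // IH.
rewrite {1}(divn_eq m a) H.
have lt := ltn_pmod m a0.
case r0: (m %% a) => [|r]; first by rewrite dvdn0.
apply/negP => kr.
have := amin r.+1 isT kr. rewrite -r0 => h. lia.
Qed.

Import GRing.Theory.
Local Open Scope ring_scope.

Lemma foldl_press i n k r (f : 'I_n -> 'Z_k) (l : seq 'I_n) (s : board n k) r' c' :
  foldl (fun t c => press i r c (f c) t) s l r' c' =
  s r' c' + \sum_(c <- l) (if affects i r c r' c' then f c else 0).
Proof.
elim: l s => [|x l IH] s /=; first by rewrite big_nil addr0.
by rewrite IH big_cons /press addrA.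
Qed.

Lemma chase_row_val i n k r (s : board n k) r' c' :
  chase_row i r s r' c' =
  s r' c' + \sum_(c < n) (if affects i r c r' c' then - s r.-1 c else 0).
Proof. by rewrite /chase_row foldl_press big_enum. Qed.

Lemma mod2 x n : (x < n.*2)%N -> (x %% n = if x < n then x else x - n)%N.
Proof.
move=> h; case: ifP => hx; first by rewrite modn_small.
have -> : x = ((x - n) + n)%N by lia.
rewrite modnDr modn_small; lia.
Qed.

Lemma card_adj n (c' : 'I_n) : (3 <= n)%N ->
  #|[pred c : 'I_n | (c' == c) || col_adj c c']| = 3%N.
Proof.
move=> n3.
have c'n := ltn_ord c'.
have U : uniq [:: c'; ordS c'; ord_pred c'].
  rewrite /= !inE -!val_eqE /=.
  rewrite !mod2; try lia.
  case: ifP; case: ifP; lia.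
move/card_uniqP: U => /= <-.
apply: eq_card => c; rewrite !inE /col_adj -!val_eqE /=.
have cn := ltn_ord c.
rewrite !mod2; try lia.
case: ifP; case: ifP; case: ifP; lia.
Qed.

Lemma sum_affects i n k r (m : 'Z_k) r' c' : (3 <= n)%N -> (1 <= r' <= i)%N ->
  \sum_(c < n) (if affects i r c r' c' then m else 0) =
  m *+ (if r' == r then 3 else if (r' == r.+1) || (r == r'.+1) then 1 else 0)%N.
Proof.
move=> n3 hr; rewrite -big_mkcond /= sumr_const; congr (_ *+ _).
rewrite /affects.
move/andP: hr => [h1 h2]; rewrite h1 h2 /=.
case: (eqVneq r' r) => [->|ne].
  rewrite -(card_adj _ c' n3); apply: eq_card => c; rewrite !inE /=.
  rewrite (_ : (r == r.+1) = false) ?orbF ?andbT //; lia.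
case: ifP => h.
  rewrite -(card1 c'); apply: eq_card => c; by rewrite -topredE /= andbT orbF eq_sym.
rewrite -(card0 'I_n); apply: eq_card => c; by rewrite -topredE /= !andbF.
Qed.

Fixpoint yv k (v : 'Z_k) j : 'Z_k :=
  match j with 0 => 0 | 1 => v | (j'.+1 as j1).+1 => v - yv k v j' - yv k v j1 *+ 3 end.
Arguments yv {k}.

Definition G k (v : 'Z_k) j r' : 'Z_k :=
  if (r' < j)%N then 0 else if r' == j then yv v j
  else if r' == j.+1 then v - yv v j.-1 else v.
Arguments G {k}.

Definition Inv i n k (v : 'Z_k) j (s : board n k) :=
  forall r' c, (1 <= r' <= i)%N -> s r' c = G v j r'.
Arguments Inv i {n k}.

Lemma yvSS k (v : 'Z_k) j : yv v j.+2 = v - yv v j - yv v j.+1 *+ 3.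
Proof. by []. Qed.

Ltac decide_ifs := repeat match goal with |- context [if ?b then _ else _] =>
  first [rewrite (_ : b = true); last by lia | rewrite (_ : b = false); last by lia] end.

Lemma step i n k (v : 'Z_k) j (s : board n k) : (3 <= n)%N -> (1 <= j)%N -> (j < i)%N ->
  Inv i v j s -> Inv i v j.+1 (chase_row i j.+1 s).
Proof.
move=> n3 j1 ji I r' c hr.
rewrite chase_row_val /=.
rewrite (eq_bigr (fun c0 => if affects i j.+1 c0 r' c then - yv v j else 0)); last first.
  move=> c0 _; rewrite I; last by lia.
  by rewrite /G ltnn eqxx.
rewrite sum_affects // I //.
rewrite /G.
have : (r' < j \/ r' = j \/ r' = j.+1 \/ r' = j.+2 \/ j.+2 < r')%N by lia.
case => [lt|[->|[->|[->|gt]]]]; decide_ifs.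
- by rewrite addr0.
- by rewrite addrN.
- case: j j1 {I ji hr} => [|j] // _.
  rewrite yvSS -pred_Sn mulNrn; ring.
- by rewrite mulr1n.
- by rewrite addr0.
Qed.

Lemma chase_inv i n k (v : 'Z_k) : (3 <= n)%N -> forall l j (s : board n k),
  (1 <= j)%N -> (j + l <= i)%N -> Inv i v j s ->
  Inv i v (j + l) (foldl (fun t r => chase_row i r t) s (iota j.+1 l)).
Proof.
move=> n3; elim=> [|l IH] j s j1 jl I /=; first by rewrite addn0.
rewrite -addSnnS; apply: IH; try lia.
apply: step => //; lia.
Qed.

Lemma solvable_iff i n k (v : 'Z_k) : (3 <= n)%N -> (1 <= i)%N ->
  one_pass_solvable i (@const_board n k v) <-> yv v i = 0.
Proof.
move=> n3 i1.
have I0 : Inv i v 1 (@const_board n k v).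
  move=> r' c hr; rewrite /G /const_board.
  have : (r' = 1 \/ r' = 2 \/ 2 < r')%N by lia.
  case=> [->|[->|gt]] //=; first by rewrite subr0.
  by decide_ifs.
have jl : (1 + i.-1 <= i)%N by lia.
have := @chase_inv i n k v n3 (i.-1) 1 _ isT jl I0.
rewrite (_ : (1 + i.-1 = i)%N); last by lia.
move=> IC.
rewrite /one_pass_solvable /chase.
split.
- move=> H; have c0 : 'I_n by exists 0%N; lia.
  by rewrite -(H i c0) ?IC ?leqnn ?i1 // /G ltnn eqxx.
- move=> H r c hr; rewrite IC // /G.
  case: ltnP => // ge; rewrite (_ : r = i); last by lia.
  by rewrite eqxx.
Qed.

Lemma cassini (R : comRingType) j :
  (fib j)%:R ^+ 2 + (fib j)%:R * (fib j.+1)%:R - (fib j.+1)%:R ^+ 2 = (-1) ^+ j.+1 :> R.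
Proof.
elim: j => [|j IH]; first by rewrite /= mul0r expr0n /= add0r expr1n sub0r expr1.
rewrite (_ : fib j.+2 = fib j.+1 + fib j)%N // natrD [RHS]exprS -IH; ring.
Qed.

Lemma signM (R : comRingType) j : (-1) ^+ j * (-1) ^+ j = 1 :> R.
Proof. by rewrite -exprMn mulrNN mulr1 expr1n. Qed.

Lemma key (R : comRingType) (s a b v : R) : s * s = 1 -> a ^+ 2 + a * b - b ^+ 2 = s ->
  s * ((b + a) * ((b + a) + b)) * v = v - s * (a * b) * v - (- s * (b * (b + a)) * v) *+ 3.
Proof.
move=> ss X; apply/eqP; rewrite -subr_eq0; apply/eqP.
transitivity (v * (s * (a ^+ 2 + a * b - b ^+ 2) - 1)); first ring.
by rewrite X ss subrr mulr0.
Qed.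

Lemma yv_closed k (v : 'Z_k) j :
  yv v j = (-1) ^+ j.+1 * ((fib j)%:R * (fib j.+1)%:R) * v.
Proof.
suff : yv v j = (-1) ^+ j.+1 * ((fib j)%:R * (fib j.+1)%:R) * v /\
       yv v j.+1 = (-1) ^+ j.+2 * ((fib j.+1)%:R * (fib j.+2)%:R) * v by case.
elim: j => [|j [IH1 IH2]].
  by split; rewrite /= ?mul0r ?mulr0 ?mul0r // expr2 mulrNN !mulr1 mul1r.
split => //.
rewrite yvSS IH1 IH2.
rewrite (_ : fib j.+2 = fib j.+1 + fib j)%N // (_ : fib j.+3 = fib j.+2 + fib j.+1)%N //.
rewrite (_ : fib j.+2 = fib j.+1 + fib j)%N // !natrD.
rewrite !exprS !mulN1r opprK.
rewrite [RHS](@key _ (- (-1) ^+ j) (fib j)%:R (fib j.+1)%:R v).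
- ring.
- by rewrite mulrNN signM.
- by rewrite cassini exprS mulN1r.
Qed.

Lemma natZ0 k x : (1 < k)%N -> (x%:R : 'Z_k) = 0 <-> (k %| x)%N.
Proof.
move=> k1; split => h.
- by have := congr1 (@nat_of_ord _) h; rewrite val_Zp_nat // => /eqP.
- by apply: val_inj; rewrite /= val_Zp_nat //; apply/eqP.
Qed.

Theorem theorem4 (k q n i a : nat) :
  prime k -> (1 <= q <= k - 1)%N -> (3 <= n)%N -> (1 <= i)%N ->
  restricted_period k a ->
  one_pass_solvable i (@const_board n k (k - q)%N%:R) <->
  (i %% a == 0)%N \/ ((i + 1) %% a == 0)%N.
Proof.
move=> pk hq n3 i1 rp.
have k1 : (1 < k)%N := prime_gt1 pk.
rewrite solvable_iff // yv_closed -mulrA -!natrM.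
set s : 'Z_k := (-1) ^+ i.+1.
have -> : s * (fib i * fib i.+1 * (k - q))%N%:R = 0 <->
          ((fib i * fib i.+1 * (k - q))%N%:R : 'Z_k) = 0.
  split => h; last by rewrite h mulr0.
  by have := congr1 (fun y => s * y) h; rewrite /= mulr0 mulrA signM mul1r.
rewrite natZ0 // !Euclid_dvdM //.
rewrite (gtnNdvd (n := (k - q)%N)); try lia.
rewrite orbF !(fib_dvd _ _ _ pk rp) addn1.
by split => [/orP|/orP].
Qed.
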